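(* Fix $X\in\{\mathsf B,\mathsf C,\mathsf D\}$ and $n\in\mathbb Z_{>0}$, and let $w\in W^X_n$. Let $i\in\mathbb Z$, $k\in[n]$ with $i<k$ be such that $t:=t_{ik}\in W^X_\infty$ and $\ell^X(wt)=\ell^X(w)+1$. Then (a) $wt\in W^X_{n+1}$; (b) $wt(k)<w(k)$; (c) $\mathrm{Des}(wt)\subseteq\mathrm{Des}(w)\cup\{k-1\}$. If moreover $wt\notin W^X_n$, then (d) $i=-n-1$; and (e) $\ell^X(wt\cdot t_{jk})\ne\ell^X(wt)+1$ for every integer $j$ with $i<j<k$ and $t_{jk}\in W^X_\infty$.
   Context: A signed permutation is a bijection $w$ of $\mathbb Z$ with $w(-i)=-w(i)$ for all $i$ and $w(i)=i$ for all but finitely many $i$; $(wt)(m)=w(t(m))$. $W^{\mathsf B}_\infty=W^{\mathsf C}_\infty$ is the group of all signed permutations, $W^{\mathsf D}_\infty$ the subgroup with $|\{i>0:w(i)<0\}|$ even; $W^X_n$ = elements of $W^X_\infty$ fixing every $m>n$. Lengths: $\ell^{\mathsf B}(w)=\ell^{\mathsf C}(w)=(\mathrm{inv}(w)+\ell_0(w))/2$, $\ell^{\mathsf D}(w)=(\mathrm{inv}(w)-\ell_0(w))/2$, with $\mathrm{inv}(w)=|\{(p,q)\in\mathbb Z^2:p<q,w(p)>w(q)\}|$ and $\ell_0(w)=|\{p>0:w(p)<0\}|$ (these are the Coxeter lengths for generators $t_0=(-1,1),t_1,t_2,\dots$ resp. $t_{-1}=(1,-2)(2,-1),t_1,t_2,\dots$,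 $t_m=(m,m+1)(-m,-m-1)$). For integers $i\ne0$ and $j$, $t_{ij}=(i,j)(-i,-j)$ (the identity if $i=-j$), and $t_{0j}=(-j,j)$, which lies in $W^{\mathsf B}_\infty$ but not $W^{\mathsf D}_\infty$. $\mathrm{Des}(w)=\{m\in\mathbb Z_{>0}:w(m)>w(m+1)\}$. *)

(* Defs.v *)
From Stdlib Require Import ZArith List Bool Lia ClassicalEpsilon.
Import ListNotations.
Open Scope Z_scope.

Definition fin_supp (w : Z -> Z) : Prop :=
  exists N : nat, forall m : Z, Z.of_nat N < Z.abs m -> w m = m.

Definition is_signed_perm (w : Z -> Z) : Prop :=
  (forall a b, w a = w b -> a = b) /\
  (forall b, exists a, w a = b) /\
  (forall i, w (- i) = - w i) /\
  fin_supp w.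

Definition comp (w t : Z -> Z) : Z -> Z := fun m => w (t m).

(* A support bound of w (chosen classically); any N with w fixing all
   |m| > N works, and such N exists whenever w is finitely supported. *)
Definition supp_bound (w : Z -> Z) : nat :=
  epsilon (inhabits 0%nat)
    (fun N : nat => forall m : Z, Z.of_nat N < Z.abs m -> w m = m).

Definition zwin (N : nat) : list Z :=
  map (fun a => Z.of_nat a - Z.of_nat N) (seq 0 (2 * N + 1)).

(* inv(w) = #{(p,q) in Z^2 : p < q, w p > w q}; all such pairs lie in the
   window [-N,N] for a support bound N. *)
Definition inv (w : Z -> Z) : Z :=
  let r := zwin (supp_bound w) in
  Z.of_nat (length (filter (fun pq => (fst pq <? snd pq) && (w (snd pq) <? w (fst pq)))
                          (list_prod r r))).

Definition ell0 (w : Z -> Z) : Z :=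
  Z.of_nat (length (filter (fun p => (0 <? p) && (w p <? 0)) (zwin (supp_bound w)))).

Inductive typ := TB | TC | TD.

Definition ell (X : typ) (w : Z -> Z) : Z :=
  match X with
  | TB | TC => (inv w + ell0 w) / 2
  | TD => (inv w - ell0 w) / 2
  end.

Definition in_Winf (X : typ) (w : Z -> Z) : Prop :=
  is_signed_perm w /\ (X = TD -> Z.Even (ell0 w)).

Definition in_W (X : typ) (n : Z) (w : Z -> Z) : Prop :=
  in_Winf X w /\ forall m, n < m -> w m = m.

(* t_{ij} = (i,j)(-i,-j) for i <> 0 (identity if i = -j); t_{0j} = (-j,j) *)
Definition tr (i j : Z) : Z -> Z := fun m =>
  if i =? 0 then
    (if m =? j then - j else if m =? - j then j else m)
  else if i =? - j then m
  else if m =? i then j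
  else if m =? j then i
  else if m =? - i then - j
  else if m =? - j then - i
  else m.

Definition is_des (w : Z -> Z) (m : Z) : Prop := 0 < m /\ w (m + 1) < w m.

(* Main.v *)
Require Import Defs.
From Stdlib Require Import ZArith List Bool Lia Permutation ClassicalEpsilon FunctionalExtensionality.
Import ListNotations.
Open Scope Z_scope.

Fixpoint sumZ {A} (f : A -> Z) (l : list A) : Z :=
  match l with [] => 0 | x :: r => f x + sumZ f r end.

Lemma sumZ_app {A} (f : A -> Z) l1 l2 : sumZ f (l1 ++ l2) = sumZ f l1 + sumZ f l2.
Proof. induction l1; simpl; [reflexivity|]. rewrite IHl1; lia. Qed.

Lemma sumZ_map {A B} (f : B -> Z) (g : A -> B) l : sumZ f (map g l) = sumZ (fun x => f (g x)) l.
Proof. induction l; simpl; congruence. Qed.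

Lemma sumZ_ext {A} (f g : A -> Z) l : (forall x, In x l -> f x = g x) -> sumZ f l = sumZ g l.
Proof. induction l; simpl; intros H; auto. rewrite H, IHl; auto. Qed.

Lemma sumZ_add {A} (f g : A -> Z) l : sumZ (fun x => f x + g x) l = sumZ f l + sumZ g l.
Proof. induction l; simpl; [reflexivity|]. rewrite IHl; lia. Qed.

Lemma sumZ_sub {A} (f g : A -> Z) l : sumZ (fun x => f x - g x) l = sumZ f l - sumZ g l.
Proof. induction l; simpl; [reflexivity|]. rewrite IHl; lia. Qed.

Lemma sumZ_zero {A} (f : A -> Z) l : (forall x, In x l -> f x = 0) -> sumZ f l = 0.
Proof. induction l; simpl; intros H; auto. rewrite H, IHl; auto. Qed.

Lemma sumZ_nonneg {A} (f : A -> Z) l : (forall x, In x l -> 0 <= f x) -> 0 <= sumZ f l.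
Proof. induction l; simpl; intros H; [lia|]. specialize (IHl (fun x Hx => H x (or_intror Hx))).
  specialize (H a (or_introl eq_refl)). lia. Qed.

Lemma sumZ_nonpos {A} (f : A -> Z) l : (forall x, In x l -> f x <= 0) -> sumZ f l <= 0.
Proof. induction l; simpl; intros H; [lia|]. specialize (IHl (fun x Hx => H x (or_intror Hx))).
  specialize (H a (or_introl eq_refl)). lia. Qed.

Lemma sumZ_ge_elt {A} (f : A -> Z) l c : (forall x, In x l -> 0 <= f x) -> In c l -> f c <= sumZ f l.
Proof. induction l; simpl; intros H Hc; [destruct Hc|].
  assert (0 <= sumZ f l) by (apply sumZ_nonneg; auto).
  destruct Hc as [<-|Hc].
  - lia.
  - specialize (IHl (fun x Hx => H x (or_intror Hx)) Hc). specialize (H a (or_introl eq_refl)). lia.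
Qed.

Lemma sumZ_perm {A} (f : A -> Z) l l' : Permutation l l' -> sumZ f l = sumZ f l'.
Proof. induction 1; simpl; lia. Qed.

Lemma sumZ_swap {A B} (f : A -> B -> Z) l m :
  sumZ (fun x => sumZ (f x) m) l = sumZ (fun y => sumZ (fun x => f x y) l) m.
Proof. induction l; simpl.
  - symmetry; apply sumZ_zero; auto.
  - rewrite IHl, <- sumZ_add. reflexivity. Qed.

Lemma sumZ_if_filter {A} (P : A -> bool) (f : A -> Z) l :
  sumZ (fun x => if P x then f x else 0) l = sumZ f (filter P l).
Proof. induction l; simpl; auto. destruct (P a); simpl; lia. Qed.

Lemma sumZ_subset (P : Z -> bool) (f : Z -> Z) l s : NoDup l -> NoDup s -> incl s l ->
  (forall x, In x l -> (P x = true <-> In x s)) ->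
  sumZ (fun x => if P x then f x else 0) l = sumZ f s.
Proof.
  intros Hl Hs Hi HP. rewrite sumZ_if_filter. apply sumZ_perm.
  apply NoDup_Permutation; [apply NoDup_filter; auto | auto |].
  intros x; rewrite filter_In; split.
  - intros [H1 H2]; apply HP; auto.
  - intros H; split; [apply Hi; auto | apply HP; auto; apply Hi; auto].
Qed.

Lemma sumZ_split {A} (P : A -> bool) (f : A -> Z) l :
  sumZ f l = sumZ (fun x => if P x then f x else 0) l + sumZ (fun x => if P x then 0 else f x) l.
Proof. induction l; simpl; auto. destruct (P a); lia. Qed.

Lemma count_sumZ {A} (P : A -> bool) l :
  Z.of_nat (length (filter P l)) = sumZ (fun x => if P x then 1 else 0) l.
Proof. induction l; simpl; auto. destruct (P a); cbn [length]; [rewrite Nat2Z.inj_succ|]; lia. Qed.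

Lemma sumZ_prod {A B} (g : A*B -> Z) l m :
  sumZ g (list_prod l m) = sumZ (fun x => sumZ (fun y => g (x,y)) m) l.
Proof. induction l; simpl; auto. rewrite sumZ_app, sumZ_map, IHl. reflexivity. Qed.

Lemma sumZ_reindex (t : Z -> Z) (f : Z -> Z) l : NoDup l -> (forall x, t (t x) = x) ->
  (forall x, In x l -> In (t x) l) ->
  sumZ (fun x => f (t x)) l = sumZ f l.
Proof.
  intros Hl Ht Hin. rewrite <- (sumZ_map f t). apply sumZ_perm.
  apply NoDup_Permutation.
  - apply FinFun.Injective_map_NoDup; auto. intros x y H. rewrite <- (Ht x), <- (Ht y), H. reflexivity.
  - auto.
  - intros x; rewrite in_map_iff; split.
    + intros [y [<- Hy]]; auto.
    + intros Hx. exists (t x). split; auto.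
Qed.

Lemma in_zwin N x : In x (zwin N) <-> - Z.of_nat N <= x <= Z.of_nat N.
Proof. unfold zwin; rewrite in_map_iff; split.
 - intros [a [<- Ha]]. apply in_seq in Ha. lia.
 - intros H. exists (Z.to_nat (x + Z.of_nat N)). split; [lia|]. apply in_seq. lia.
Qed.

Lemma nodup_zwin N : NoDup (zwin N).
Proof. unfold zwin. apply FinFun.Injective_map_NoDup; [intros a b; lia | apply seq_NoDup]. Qed.

Definition mem (x : Z) (s : list Z) : bool := existsb (Z.eqb x) s.
Lemma mem_In x s : mem x s = true <-> In x s.
Proof. unfold mem. rewrite existsb_exists. split.
  - intros [y [H1 H2]]; apply Z.eqb_eq in H2; subst; auto.
  - intros H; exists x; split; auto; apply Z.eqb_refl. Qed.
Lemma mem_notIn x s : mem x s = false <-> ~ In x s.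
Proof. rewrite <- mem_In. destruct (mem x s); split; congruence. Qed.
Definition ind (b : bool) : Z := if b then 1 else 0.
Definition bnd (N : nat) (w : Z -> Z) : Prop := forall m, Z.of_nat N < Z.abs m -> w m = m.
Definition invM (N : nat) (w : Z -> Z) : Z :=
  sumZ (fun p => sumZ (fun q => ind ((p <? q) && (w q <? w p))) (zwin N)) (zwin N).
Definition ell0M (N : nat) (w : Z -> Z) : Z := sumZ (fun p => ind ((0 <? p) && (w p <? 0))) (zwin N).
Definition ellM (X : typ) N w : Z :=
  match X with
  | TB | TC => (invM N w + ell0M N w) / 2
  | TD => (invM N w - ell0M N w) / 2
  end.

Lemma supp_bound_spec w : fin_supp w -> bnd (supp_bound w) w.
Proof. intros H. unfold supp_bound, bnd.
  apply (epsilon_spec (inhabits 0%nat) (fun N : nat => forall m, Z.of_nat N < Z.abs m -> w m = m)). exact H. Qed.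

Lemma sp_0 w : is_signed_perm w -> w 0 = 0.
Proof. intros [_ [_ [Ho _]]]. specialize (Ho 0). simpl in Ho. lia. Qed.

Lemma win_pres w N : is_signed_perm w -> bnd N w ->
  forall x, Z.abs x <= Z.of_nat N -> Z.abs (w x) <= Z.of_nat N.
Proof. intros [Hi _] Hb x Hx. destruct (Z_le_gt_dec (Z.abs (w x)) (Z.of_nat N)) as [H|H]; auto.
 assert (H2 : w (w x) = w x) by (apply Hb; lia). apply Hi in H2. lia. Qed.

Lemma inv_pair_in w N p q : is_signed_perm w -> bnd N w -> p < q -> w q < w p ->
  Z.abs p <= Z.of_nat N /\ Z.abs q <= Z.of_nat N.
Proof.
 intros Hw Hb Hpq Hv.
 destruct (Z_le_gt_dec (Z.abs p) (Z.of_nat N)) as [Hp|Hp];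
 destruct (Z_le_gt_dec (Z.abs q) (Z.of_nat N)) as [Hq|Hq].
 - auto.
 - pose proof (win_pres w N Hw Hb p Hp). rewrite (Hb q ltac:(lia)) in Hv. lia.
 - pose proof (win_pres w N Hw Hb q Hq). rewrite (Hb p ltac:(lia)) in Hv. lia.
 - rewrite (Hb p ltac:(lia)), (Hb q ltac:(lia)) in Hv. lia.
Qed.

Lemma zwin_incl K M : (K <= M)%nat -> incl (zwin K) (zwin M).
Proof. intros H x. rewrite !in_zwin. lia. Qed.

Lemma invM_window w K M : is_signed_perm w -> bnd K w -> (K <= M)%nat -> invM M w = invM K w.
Proof.
  intros Hw Hb HKM. unfold invM.
  rewrite <- (sumZ_subset (fun p => Z.abs p <=? Z.of_nat K)
     (fun p => sumZ (fun q => ind ((p <? q) && (w q <? w p))) (zwin K)) (zwin M) (zwin K));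
    [| apply nodup_zwin | apply nodup_zwin | apply zwin_incl; auto
     | intros x _; rewrite Z.leb_le, in_zwin; lia].
  apply sumZ_ext. intros p Hp.
  rewrite <- (sumZ_subset (fun q => Z.abs q <=? Z.of_nat K)
     (fun q => ind ((p <? q) && (w q <? w p))) (zwin M) (zwin K));
    [| apply nodup_zwin | apply nodup_zwin | apply zwin_incl; auto
     | intros x _; rewrite Z.leb_le, in_zwin; lia].
  destruct (Z.leb_spec (Z.abs p) (Z.of_nat K)) as [HpK|HpK].
  - apply sumZ_ext. intros q Hq.
    destruct (Z.leb_spec (Z.abs q) (Z.of_nat K)); auto.
    unfold ind. destruct (Z.ltb_spec p q); destruct (Z.ltb_spec (w q) (w p)); simpl; auto.
    pose proof (inv_pair_in w K p q Hw Hb); lia.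
  - apply sumZ_zero. intros q Hq.
    unfold ind. destruct (Z.ltb_spec p q); destruct (Z.ltb_spec (w q) (w p)); simpl; auto.
    pose proof (inv_pair_in w K p q Hw Hb); lia.
Qed.

Lemma ell0M_window w K M : is_signed_perm w -> bnd K w -> (K <= M)%nat -> ell0M M w = ell0M K w.
Proof.
  intros Hw Hb HKM. unfold ell0M.
  rewrite <- (sumZ_subset (fun p => Z.abs p <=? Z.of_nat K)
     (fun p => ind ((0 <? p) && (w p <? 0))) (zwin M) (zwin K));
    [| apply nodup_zwin | apply nodup_zwin | apply zwin_incl; auto
     | intros x _; rewrite Z.leb_le, in_zwin; lia].
  apply sumZ_ext. intros p Hp.
  destruct (Z.leb_spec (Z.abs p) (Z.of_nat K)); auto.
  rewrite (Hb p) by lia. unfold ind. destruct (Z.ltb_spec 0 p); destruct (Z.ltb_spec p 0); simpl; auto; lia.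
Qed.

Lemma invM_any w M1 M2 : is_signed_perm w -> bnd M1 w -> bnd M2 w -> invM M1 w = invM M2 w.
Proof. intros Hw H1 H2. destruct (Nat.le_ge_cases M1 M2).
  - symmetry. apply invM_window; auto.
  - apply invM_window; auto. Qed.

Lemma ell0M_any w M1 M2 : is_signed_perm w -> bnd M1 w -> bnd M2 w -> ell0M M1 w = ell0M M2 w.
Proof. intros Hw H1 H2. destruct (Nat.le_ge_cases M1 M2).
  - symmetry. apply ell0M_window; auto.
  - apply ell0M_window; auto. Qed.

Lemma inv_eq w : inv w = invM (supp_bound w) w.
Proof. unfold inv. rewrite count_sumZ, sumZ_prod. reflexivity. Qed.
Lemma ell0_eq w : ell0 w = ell0M (supp_bound w) w.
Proof. unfold ell0. rewrite count_sumZ. reflexivity. Qed.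

Lemma ell_M X M w : is_signed_perm w -> bnd M w -> ell X w = ellM X M w.
Proof.
  intros Hw Hb. pose proof (supp_bound_spec w (proj2 (proj2 (proj2 Hw)))) as Hs.
  unfold ell, ellM. rewrite inv_eq, ell0_eq.
  rewrite (invM_any w (supp_bound w) M), (ell0M_any w (supp_bound w) M); auto.
Qed.

Lemma ell0_M M w : is_signed_perm w -> bnd M w -> ell0 w = ell0M M w.
Proof.
  intros Hw Hb. pose proof (supp_bound_spec w (proj2 (proj2 (proj2 Hw)))) as Hs.
  rewrite ell0_eq. apply ell0M_any; auto.
Qed.
Ltac dez := repeat match goal with |- context [Z.eqb ?a ?b] => destruct (Z.eqb_spec a b) end.

Lemma tr_vals i k : i <> 0 -> i <> -k -> i <> k -> k <> 0 ->
  tr i k i = k /\ tr i k k = i /\ tr i k (-i) = -k /\ tr i k (-k) = -i.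
Proof. intros. unfold tr. repeat split; dez; lia. Qed.

Lemma tr_fix i k m : m <> i -> m <> k -> m <> -i -> m <> -k -> tr i k m = m.
Proof. intros. unfold tr. dez; lia. Qed.

Lemma tr0_vals k : k <> 0 -> tr 0 k k = -k /\ tr 0 k (-k) = k.
Proof. intros. unfold tr. split; dez; lia. Qed.

Lemma tr0_fix k m : m <> k -> m <> -k -> tr 0 k m = m.
Proof. intros. unfold tr. dez; lia. Qed.

Lemma tr_id k m : k <> 0 -> tr (-k) k m = m.
Proof. intros. unfold tr. dez; lia. Qed.

Lemma tr_invol i k m : 0 < k -> i < k -> tr i k (tr i k m) = m.
Proof.
  intros Hk Hik0.
  destruct (Z.eq_dec i 0) as [->|Hi0].
  { destruct (tr0_vals k) as [A B]; [lia|].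
    destruct (Z.eq_dec m k) as [->|]; [rewrite A, B; auto|].
    destruct (Z.eq_dec m (-k)) as [->|]; [rewrite B, A; auto|].
    rewrite (tr0_fix k m) by auto; rewrite (tr0_fix k m) by auto; auto. }
  destruct (Z.eq_dec i (-k)) as [->|Hik]. { rewrite !tr_id; lia. }
  destruct (Z.eq_dec i k) as [->|Hkk].
  { lia. }
  destruct (tr_vals i k) as [A [B [C D]]]; auto; try lia.
  destruct (Z.eq_dec m i) as [->|]; [rewrite A, B; auto|].
  destruct (Z.eq_dec m k) as [->|]; [rewrite B, A; auto|].
  destruct (Z.eq_dec m (-i)) as [->|]; [rewrite C, D; auto|].
  destruct (Z.eq_dec m (-k)) as [->|]; [rewrite D, C; auto|].
  rewrite (tr_fix i k m) by auto; rewrite (tr_fix i k m) by auto; auto.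
Qed.

Lemma tr_win i k m M : Z.abs i <= M -> Z.abs k <= M -> Z.abs m <= M -> Z.abs (tr i k m) <= M.
Proof. intros. unfold tr. dez; lia. Qed.

Lemma tr_bnd i k M : Z.abs i <= Z.of_nat M -> Z.abs k <= Z.of_nat M -> bnd M (tr i k).
Proof. intros H1 H2 m Hm. unfold tr. dez; lia. Qed.

Lemma comp_sp u t : is_signed_perm u -> is_signed_perm t -> is_signed_perm (comp u t).
Proof.
  intros [Ui [Us [Uo [N1 UN]]]] [Ti [Ts [To [N2 TN]]]]. unfold comp. repeat split.
  - intros a b H. apply Ui, Ti in H. auto.
  - intros b. destruct (Us b) as [a Ha]. destruct (Ts a) as [c Hc]. exists c. congruence.
  - intros x. rewrite To, Uo. reflexivity.
  - exists (N1 + N2)%nat. intros m Hm. rewrite TN by lia. apply UN. lia.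
Qed.

Lemma comp_bnd M u t : bnd M u -> bnd M t -> bnd M (comp u t).
Proof. intros H1 H2 m Hm. unfold comp. rewrite H2 by auto. auto. Qed.

Lemma decomp (h : Z -> Z -> Z) l S : NoDup l -> NoDup S -> incl S l ->
  (forall p q, ~ In p S -> ~ In q S -> h p q = 0) ->
  sumZ (fun p => sumZ (fun q => h p q) l) l =
  sumZ (fun c => if mem c S then 0 else sumZ (fun s => h c s + h s c) S) l
  + sumZ (fun s => sumZ (fun s' => h s s') S) S.
Proof.
  intros Hl HS Hi H0.
  assert (HP : forall x, In x l -> (mem x S = true <-> In x S)) by (intros; apply mem_In).
  transitivity (sumZ (fun p => sumZ (fun s => h p s) S + sumZ (fun q => if mem q S then 0 else h p q) l) l).
  { apply sumZ_ext. intros p _. rewrite (sumZ_split (fun q => mem q S)).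
    rewrite (sumZ_subset (fun q => mem q S) (fun q => h p q) l S); auto. }
  rewrite sumZ_add.
  rewrite (sumZ_split (fun p => mem p S) (fun p => sumZ (fun s => h p s) S)).
  rewrite (sumZ_subset (fun p => mem p S) (fun p => sumZ (fun s => h p s) S) l S); auto.
  rewrite (sumZ_split (fun p => mem p S) (fun p => sumZ (fun q => if mem q S then 0 else h p q) l)).
  rewrite (sumZ_subset (fun p => mem p S) (fun p => sumZ (fun q => if mem q S then 0 else h p q) l) l S); auto.
  assert (Z0 : sumZ (fun x => if mem x S then 0 else sumZ (fun q => if mem q S then 0 else h x q) l) l = 0).
  { apply sumZ_zero. intros x _. destruct (mem x S) eqn:Ex; auto. apply sumZ_zero. intros q _.
    destruct (mem q S) eqn:Eq; auto. apply H0; apply mem_notIn; auto. }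
  rewrite Z0.
  rewrite (sumZ_swap (fun s q => if mem q S then 0 else h s q)).
  assert (E2 : sumZ (fun c => if mem c S then 0 else sumZ (fun s => h c s + h s c) S) l =
     sumZ (fun x => if mem x S then 0 else sumZ (fun s => h x s) S) l +
     sumZ (fun y => sumZ (fun x => if mem y S then 0 else h x y) S) l).
  { rewrite <- sumZ_add. apply sumZ_ext. intros c _. destruct (mem c S).
    - rewrite sumZ_zero; auto.
    - rewrite sumZ_add. reflexivity. }
  rewrite E2. lia.
Qed.

Definition hh (u t : Z -> Z) (p q : Z) : Z :=
  (ind (t p <? t q) - ind (p <? q)) * ind (u q <? u p).

Lemma delta_inv u t M S : (forall x, t (t x) = x) ->
  (forall x, In x (zwin M) -> In (t x) (zwin M)) ->
  (forall x, ~ In x S -> t x = x) -> NoDup S -> incl S (zwin M) ->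
  invM M (comp u t) - invM M u =
  sumZ (fun c => if mem c S then 0 else sumZ (fun s => hh u t c s + hh u t s c) S) (zwin M)
  + sumZ (fun s => sumZ (fun s' => hh u t s s') S) S.
Proof.
  intros Hinv Hwin Hfix HS Hi.
  rewrite <- decomp; [| apply nodup_zwin | auto | auto |].
  2:{ intros p q Hp Hq. unfold hh. rewrite (Hfix p Hp), (Hfix q Hq). lia. }
  unfold invM, comp.
  set (F := fun p q => ind ((t p <? t q) && (u q <? u p))).
  transitivity (sumZ (fun p => sumZ (fun q => F p q) (zwin M)) (zwin M) -
                sumZ (fun p => sumZ (fun q => ind ((p <? q) && (u q <? u p))) (zwin M)) (zwin M)).
  { f_equal.
    rewrite <- (sumZ_reindex t (fun p => sumZ (fun q => F p q) (zwin M))); auto using nodup_zwin.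
    apply sumZ_ext. intros p _.
    rewrite <- (sumZ_reindex t (fun q => F (t p) q)); auto using nodup_zwin.
    apply sumZ_ext. intros q _. unfold F. rewrite !Hinv. reflexivity. }
  rewrite <- sumZ_sub. apply sumZ_ext. intros p _. rewrite <- sumZ_sub. apply sumZ_ext. intros q _.
  unfold F, hh, ind. destruct (t p <? t q), (p <? q), (u q <? u p); reflexivity.
Qed.

Lemma delta_ell0 u t M S : (forall x, ~ In x S -> t x = x) -> NoDup S -> incl S (zwin M) ->
  ell0M M (comp u t) - ell0M M u =
  sumZ (fun s => ind (0 <? s) * (ind (u (t s) <? 0) - ind (u s <? 0))) S.
Proof.
  intros Hfix HS Hi. unfold ell0M, comp. rewrite <- sumZ_sub.
  set (g := fun s => ind (0 <? s) * (ind (u (t s) <? 0) - ind (u s <? 0))).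
  transitivity (sumZ g (zwin M)).
  { apply sumZ_ext. intros p _. unfold g, ind. destruct (0 <? p), (u (t p) <? 0), (u p <? 0); reflexivity. }
  rewrite (sumZ_split (fun p => mem p S)).
  rewrite (sumZ_subset (fun p => mem p S) g (zwin M) S); auto using nodup_zwin.
  2:{ intros; apply mem_In. }
  rewrite (sumZ_zero (fun x => if mem x S then 0 else g x)); [lia|].
  intros x _. destruct (mem x S) eqn:E; auto. unfold g. rewrite Hfix by (apply mem_notIn; auto). lia.
Qed.
Ltac smart_ltb := repeat match goal with
 | |- context [?x <? ?y] => first [ rewrite (proj2 (Z.ltb_lt x y)) by lia
                                  | rewrite (proj2 (Z.ltb_ge x y)) by lia
                                  | destruct (Z.ltb_spec x y) ] end.

Lemma pair_bound u t a b c : t a = b -> t b = a -> t c = c -> a < b -> c <> a -> c <> b ->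
  u c <> u a -> u c <> u b ->
  (u a < u b -> 0 <= hh u t c a + hh u t a c + hh u t c b + hh u t b c /\
     (a < c < b -> u a < u c < u b -> 2 <= hh u t c a + hh u t a c + hh u t c b + hh u t b c)) /\
  (u b < u a -> hh u t c a + hh u t a c + hh u t c b + hh u t b c <= 0).
Proof.
  intros Ha Hb Hc Hab H1 H2 H3 H4. unfold hh, ind. rewrite Ha, Hb, Hc.
  split; [intros H5; split; [|intros H6 H7]|intros H5]; smart_ltb; lia.
Qed.

Definition NB M u := invM M u + ell0M M u.
Definition ND M u := invM M u - ell0M M u.

Lemma cover_gen u M i k : is_signed_perm u -> bnd M u -> 0 < k -> i < k -> i <> 0 -> i <> -k ->
  Z.abs i <= Z.of_nat M -> k <= Z.of_nat M ->
  (u i < u k -> exists I, 0 <= I /\ NB M (comp u (tr i k)) >= NB M u + 2 + I /\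
       ND M (comp u (tr i k)) >= ND M u + 2 + I /\
       (forall c, c <> i -> c <> k -> c <> -i -> c <> -k -> i < c < k -> u i < u c < u k -> 2 <= I)) /\
  (u k < u i -> NB M (comp u (tr i k)) <= NB M u - 2 /\ ND M (comp u (tr i k)) <= ND M u - 2).
Proof.
  intros Hu Hb Hk Hik Hi0 Hmk HiM HkM.
  pose proof Hu as [Ui [_ [Uo _]]].
  pose proof (sp_0 u Hu) as U0.
  destruct (tr_vals i k) as [Ti [Tk [Tmi Tmk]]]; try lia.
  assert (Hfix0 : forall x, x <> i -> x <> k -> x <> -i -> x <> -k -> tr i k x = x) by (intros; apply tr_fix; auto).
  set (t := tr i k) in *.
  set (S := [i; k; -i; -k]).
  assert (HS : NoDup S) by (unfold S; repeat constructor; simpl; intuition lia).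
  assert (HSi : incl S (zwin M)) by (unfold S; intros x Hx; simpl in Hx; apply in_zwin; intuition lia).
  assert (Hfix : forall x, ~ In x S -> t x = x) by (intros x Hx; unfold S in Hx; simpl in Hx; apply Hfix0; intuition).
  assert (Hinv : forall x, t (t x) = x) by (intros; apply tr_invol; lia).
  assert (Hwin : forall x, In x (zwin M) -> In (t x) (zwin M)).
  { intros x; rewrite !in_zwin; intros; pose proof (tr_win i k x (Z.of_nat M)); unfold t; lia. }
  pose proof (delta_inv u t M S Hinv Hwin Hfix HS HSi) as DI.
  pose proof (delta_ell0 u t M S Hfix HS HSi) as DE.
  set (I := sumZ (fun c => if mem c S then 0 else sumZ (fun s => hh u t c s + hh u t s c) S) (zwin M)) in DI.
  assert (Vik : u i <> u k) by (intros H; apply Ui in H; lia).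
  assert (Vimk : u i <> - u k) by (rewrite <- Uo; intros H; apply Ui in H; lia).
  assert (Vi0 : u i <> 0) by (rewrite <- U0; intros H; apply Ui in H; lia).
  assert (Vk0 : u k <> 0) by (rewrite <- U0; intros H; apply Ui in H; lia).
  assert (HT : forall c, In c (zwin M) -> mem c S = false ->
     let T := sumZ (fun s => hh u t c s + hh u t s c) S in
     (u i < u k -> 0 <= T /\ (i < c < k -> u i < u c < u k -> 2 <= T)) /\ (u k < u i -> T <= 0)).
  { intros c Hc Hm T. apply mem_notIn in Hm. unfold S in Hm; simpl in Hm.
    assert (c <> i /\ c <> k /\ c <> -i /\ c <> -k) as [C1 [C2 [C3 C4]]] by intuition.
    assert (Tc : t c = c) by (apply Hfix0; auto).
    assert (W1 : u c <> u i) by (intros H; apply Ui in H; lia).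
    assert (W2 : u c <> u k) by (intros H; apply Ui in H; lia).
    assert (W3 : u c <> u (-i)) by (intros H; apply Ui in H; lia).
    assert (W4 : u c <> u (-k)) by (intros H; apply Ui in H; lia).
    pose proof (pair_bound u t i k c Ti Tk Tc Hik C1 C2 W1 W2) as P1.
    pose proof (pair_bound u t (-k) (-i) c Tmk Tmi Tc ltac:(lia) C4 C3 W4 W3) as P2.
    rewrite !Uo in P2.
    subst T. unfold S. cbn [sumZ].
    destruct P1 as [P1a P1b]; destruct P2 as [P2a P2b].
    generalize dependent (hh u t c i); generalize dependent (hh u t i c);
    generalize dependent (hh u t c k); generalize dependent (hh u t k c);
    generalize dependent (hh u t c (-i)); generalize dependent (hh u t (-i) c);
    generalize dependent (hh u t c (-k)); generalize dependent (hh u t (-k) c); intros.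
    clear Hfix0 Hfix Hinv Hwin HS HSi Hm Hc C1 C2 C3 C4 W1 W2 W3 W4 Vik Vimk Vi0 Vk0 Hi0 Hmk Uo U0 Ui Ti Tk Tmi Tmk Tc.
    split.
    - intros H. destruct (P1a H) as [Q1 Q2]. destruct (P2a ltac:(lia)) as [Q3 Q4]. split; [lia|].
      intros. specialize (Q2 H0 H1). lia.
    - intros H. specialize (P1b H). specialize (P2b ltac:(lia)). lia. }
  assert (I1 : u i < u k -> 0 <= I).
  { intros H. apply sumZ_nonneg. intros c Hc. destruct (mem c S) eqn:E; [lia|].
    apply (HT c Hc E); auto. }
  assert (I2 : u k < u i -> I <= 0).
  { intros H. apply sumZ_nonpos. intros c Hc. destruct (mem c S) eqn:E; [lia|].
    apply (HT c Hc E); auto. }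
  assert (I3 : forall c, c <> i -> c <> k -> c <> -i -> c <> -k -> i < c < k -> u i < u c < u k -> 2 <= I).
  { intros c C1 C2 C3 C4 Cb Cv.
    assert (Hc : In c (zwin M)) by (apply in_zwin; lia).
    assert (E : mem c S = false) by (apply mem_notIn; unfold S; simpl; intuition lia).
    assert (H2 : 2 <= (if mem c S then 0 else sumZ (fun s => hh u t c s + hh u t s c) S)).
    { rewrite E. apply (HT c Hc E); auto; lia. }
    eapply Z.le_trans; [exact H2|].
    apply (sumZ_ge_elt (fun c => if mem c S then 0 else sumZ (fun s => hh u t c s + hh u t s c) S)); auto.
    intros x Hx. destruct (mem x S) eqn:Ex; [lia|]. destruct (Z.lt_ge_cases (u i) (u k)).
    - apply (HT x Hx Ex); auto.
    - lia. }
  clearbody I. clear HT Hfix0 Hfix Hinv Hwin HS HSi.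
  unfold S in DE, DI. cbn [sumZ] in DE, DI. unfold hh in DI.
  rewrite Ti, Tk, Tmi, Tmk, !Uo in DI. rewrite Ti, Tk, Tmi, Tmk, !Uo in DE.
  unfold NB, ND. unfold ind in DI, DE.
  clear Ti Tk Tmi Tmk Ui Uo U0 Hu Hb.
  split.
  - intros H. specialize (I1 H). exists I. split; [auto|]. split; [|split; [|exact I3]];
    clear I3; revert DI DE; smart_ltb; intros; lia.
  - intros H. specialize (I2 H). split; revert DI DE; smart_ltb; intros; lia.
Qed.
Lemma cover_zero u M k : is_signed_perm u -> bnd M u -> 0 < k -> k <= Z.of_nat M ->
  (0 < u k -> NB M (comp u (tr 0 k)) >= NB M u + 4) /\
  (u k < 0 -> NB M (comp u (tr 0 k)) <= NB M u - 2).
Proof.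
  intros Hu Hb Hk HkM.
  pose proof Hu as [Ui [_ [Uo _]]].
  pose proof (sp_0 u Hu) as U0.
  destruct (tr0_vals k) as [Tk Tmk]; try lia.
  assert (Hfix0 : forall x, x <> k -> x <> -k -> tr 0 k x = x) by (intros; apply tr0_fix; auto).
  set (t := tr 0 k) in *.
  set (S := [k; -k]).
  assert (HS : NoDup S) by (unfold S; repeat constructor; simpl; intuition lia).
  assert (HSi : incl S (zwin M)) by (unfold S; intros x Hx; simpl in Hx; apply in_zwin; intuition lia).
  assert (Hfix : forall x, ~ In x S -> t x = x) by (intros x Hx; unfold S in Hx; simpl in Hx; apply Hfix0; intuition).
  assert (Hinv : forall x, t (t x) = x) by (intros; apply tr_invol; lia).
  assert (Hwin : forall x, In x (zwin M) -> In (t x) (zwin M)).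
  { intros x; rewrite !in_zwin; intros; pose proof (tr_win 0 k x (Z.of_nat M)); unfold t; lia. }
  assert (Vk0 : u k <> 0) by (rewrite <- U0; intros H; apply Ui in H; lia).
  assert (HT : forall c, In c (zwin M) -> mem c S = false ->
     let T := sumZ (fun s => hh u t c s + hh u t s c) S in
     (0 < u k -> 0 <= T /\ (c = 0 -> 2 <= T)) /\ (u k < 0 -> T <= 0)).
  { intros c Hc Hm T. apply mem_notIn in Hm. unfold S in Hm; simpl in Hm.
    assert (c <> k /\ c <> -k) as [C1 C2] by intuition.
    assert (Tc : t c = c) by (apply Hfix0; auto).
    assert (W1 : u c <> u k) by (intros H; apply Ui in H; lia).
    assert (W2 : u c <> u (-k)) by (intros H; apply Ui in H; lia).
    assert (Hc0 : c = 0 -> u c = 0) by (intros ->; auto).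
    pose proof (pair_bound u t (-k) k c Tmk Tk Tc ltac:(lia) C2 C1 W2 W1) as P1.
    rewrite !Uo in P1.
    subst T. unfold S. cbn [sumZ].
    destruct P1 as [P1a P1b].
    generalize dependent (hh u t c k); generalize dependent (hh u t k c);
    generalize dependent (hh u t c (-k)); generalize dependent (hh u t (-k) c); intros.
    clear Hfix0 Hfix Hinv Hwin HS HSi Hm Hc W1 W2 Uo U0 Ui Tk Tmk Tc.
    split.
    - intros H. destruct (P1a ltac:(lia)) as [Q1 Q2]. split; [lia|].
      intros E. specialize (Hc0 E). specialize (Q2 ltac:(lia) ltac:(lia)). lia.
    - intros H. specialize (P1b ltac:(lia)). lia. }
  pose proof (delta_inv u t M S Hinv Hwin Hfix HS HSi) as DI.
  pose proof (delta_ell0 u t M S Hfix HS HSi) as DE.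
  set (I := sumZ (fun c => if mem c S then 0 else sumZ (fun s => hh u t c s + hh u t s c) S) (zwin M)) in DI.
  assert (I1 : 0 < u k -> 2 <= I).
  { intros H.
    assert (Hc : In 0 (zwin M)) by (apply in_zwin; lia).
    assert (E : mem 0 S = false) by (apply mem_notIn; unfold S; simpl; intuition lia).
    assert (H2 : 2 <= (if mem 0 S then 0 else sumZ (fun s => hh u t 0 s + hh u t s 0) S)).
    { rewrite E. apply (HT 0 Hc E); auto. }
    eapply Z.le_trans; [exact H2|].
    apply (sumZ_ge_elt (fun c => if mem c S then 0 else sumZ (fun s => hh u t c s + hh u t s c) S)); auto.
    intros x Hx. destruct (mem x S) eqn:Ex; [lia|]. apply (HT x Hx Ex); auto. }
  assert (I2 : u k < 0 -> I <= 0).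
  { intros H. apply sumZ_nonpos. intros c Hc. destruct (mem c S) eqn:E; [lia|].
    apply (HT c Hc E); auto. }
  clearbody I. clear HT Hfix0 Hfix Hinv Hwin HS HSi.
  unfold S in DE, DI. cbn [sumZ] in DE, DI. unfold hh in DI.
  rewrite Tk, Tmk, !Uo in DI. rewrite Tk, Tmk, !Uo in DE.
  unfold NB. unfold ind in DI, DE.
  clear Tk Tmk Ui Uo U0 Hu Hb.
  split.
  - intros H. specialize (I1 H). revert DI DE; smart_ltb; intros; lia.
  - intros H. specialize (I2 H). revert DI DE; smart_ltb; intros; lia.
Qed.

Lemma ell0_tr0 k : 0 < k -> is_signed_perm (tr 0 k) -> ell0 (tr 0 k) = 1.
Proof.
  intros Hk Hs.
  set (M := Z.to_nat k).
  assert (Hb : bnd M (tr 0 k)) by (apply tr_bnd; unfold M; lia).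
  rewrite (ell0_M M) by auto.
  destruct (tr0_vals k) as [Tk Tmk]; try lia.
  assert (Hfix : forall x, ~ In x [k; -k] -> tr 0 k x = x).
  { intros x Hx; simpl in Hx. apply tr0_fix; intuition. }
  assert (HS : NoDup [k; -k]) by (repeat constructor; simpl; intuition lia).
  assert (HSi : incl [k; -k] (zwin M)) by (intros x Hx; simpl in Hx; apply in_zwin; unfold M; intuition lia).
  pose proof (delta_ell0 (fun x => x) (tr 0 k) M [k; -k] Hfix HS HSi) as DE.
  assert (Z0 : ell0M M (fun x => x) = 0).
  { unfold ell0M. apply sumZ_zero. intros x _. unfold ind. destruct (0 <? x) eqn:E1, (x <? 0) eqn:E2; simpl; auto.
    apply Z.ltb_lt in E1; apply Z.ltb_lt in E2; lia. }
  unfold comp in DE. cbn [sumZ] in DE. rewrite Tk, Tmk in DE. unfold ind in DE.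
  revert DE. smart_ltb. intros. change (ell0M M (fun m => tr 0 k m) = 1) . lia.
Qed.
Lemma ell0_parity u M i k : is_signed_perm u -> bnd M u -> 0 < k -> i < k -> i <> 0 -> i <> -k ->
  Z.abs i <= Z.of_nat M -> k <= Z.of_nat M ->
  Z.Even (ell0M M (comp u (tr i k)) - ell0M M u).
Proof.
  intros Hu Hb Hk Hik Hi0 Hmk HiM HkM.
  pose proof Hu as [Ui [_ [Uo _]]].
  pose proof (sp_0 u Hu) as U0.
  destruct (tr_vals i k) as [Ti [Tk [Tmi Tmk]]]; try lia.
  assert (Hfix0 : forall x, x <> i -> x <> k -> x <> -i -> x <> -k -> tr i k x = x) by (intros; apply tr_fix; auto).
  set (S := [i; k; -i; -k]).
  assert (HS : NoDup S) by (unfold S; repeat constructor; simpl; intuition lia).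
  assert (HSi : incl S (zwin M)) by (unfold S; intros x Hx; simpl in Hx; apply in_zwin; intuition lia).
  assert (Hfix : forall x, ~ In x S -> tr i k x = x) by (intros x Hx; unfold S in Hx; simpl in Hx; apply Hfix0; intuition).
  pose proof (delta_ell0 u (tr i k) M S Hfix HS HSi) as DE.
  assert (Vi0 : u i <> 0) by (rewrite <- U0; intros H; apply Ui in H; lia).
  assert (Vk0 : u k <> 0) by (rewrite <- U0; intros H; apply Ui in H; lia).
  unfold S in DE. cbn [sumZ] in DE. rewrite Ti, Tk, Tmi, Tmk, !Uo in DE. unfold ind in DE.
  clear Hfix0 Hfix HS HSi Ti Tk Tmi Tmk Ui Uo U0 Hu Hb.
  revert DE. smart_ltb; intros DE; rewrite DE; apply Z.even_spec; reflexivity.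
Qed.

Lemma bnd_of_pos w N : (forall x, w (-x) = - w x) -> (forall m, Z.of_nat N < m -> w m = m) -> bnd N w.
Proof. intros Ho H m Hm. destruct (Z_lt_le_dec 0 m).
  - apply H; lia.
  - rewrite <- (Z.opp_involutive m), Ho, H; lia. Qed.

Lemma bnd_mono N1 N2 w : (N1 <= N2)%nat -> bnd N1 w -> bnd N2 w.
Proof. intros H1 H2 m Hm. apply H2; lia. Qed.

Lemma ell_id_k X w k : 0 < k -> ell X (comp w (tr (-k) k)) = ell X w.
Proof. intros. f_equal. extensionality m. unfold comp. rewrite tr_id; lia. Qed.

Lemma tr_cases i k p : i <> 0 -> i <> -k -> i <> k -> k <> 0 ->
  (p = i /\ tr i k p = k) \/ (p = k /\ tr i k p = i) \/ (p = -i /\ tr i k p = -k) \/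
  (p = -k /\ tr i k p = -i) \/ (p <> i /\ p <> k /\ p <> -i /\ p <> -k /\ tr i k p = p).
Proof.
  intros. destruct (tr_vals i k) as [A [B [C D]]]; auto.
  destruct (Z.eq_dec p i) as [->|]; [left; auto|].
  destruct (Z.eq_dec p k) as [->|]; [right; left; auto|].
  destruct (Z.eq_dec p (-i)) as [->|]; [right; right; left; auto|].
  destruct (Z.eq_dec p (-k)) as [->|]; [right; right; right; left; auto|].
  right; right; right; right. repeat split; auto. apply tr_fix; auto.
Qed.
Ltac dlia := Z.div_mod_to_equations; lia.

Theorem lemma2p4 (X : typ) (n : Z) (w : Z -> Z) (i k : Z) :
  0 < n ->
  in_W X n w ->
  1 <= k <= n ->
  i < k ->
  in_Winf X (tr i k) ->
  ell X (comp w (tr i k)) = ell X w + 1 ->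
  (* (a) *) in_W X (n + 1) (comp w (tr i k)) /\
  (* (b) *) comp w (tr i k) k < w k /\
  (* (c) *) (forall m, is_des (comp w (tr i k)) m -> is_des w m \/ m = k - 1) /\
  (~ in_W X n (comp w (tr i k)) ->
     (* (d) *) i = - n - 1 /\
     (* (e) *) (forall j, i < j < k -> in_Winf X (tr j k) ->
                  ell X (comp (comp w (tr i k)) (tr j k)) <> ell X (comp w (tr i k)) + 1)).
Proof.
  intros Hn [[Hw HwD] Hwfix] Hk Hik [Ht HtD] Hell.
  pose proof Hw as [Wi [Ws [Wo Wf]]].
  pose proof (sp_0 w Hw) as W0.
  assert (Hwb : bnd (Z.to_nat n) w) by (apply bnd_of_pos; auto; intros; apply Hwfix; lia).
  destruct (Z.eq_dec i (-k)) as [Hmk|Hmk].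
  { subst i. rewrite ell_id_k in Hell by lia. lia. }
  set (M := Z.to_nat (n + Z.abs i)).
  assert (HwM : bnd M w) by (apply (bnd_mono (Z.to_nat n)); [unfold M; lia | auto]).
  assert (HtM : bnd M (tr i k)) by (apply tr_bnd; unfold M; lia).
  assert (Hv : is_signed_perm (comp w (tr i k))) by (apply comp_sp; auto).
  assert (HvM : bnd M (comp w (tr i k))) by (apply comp_bnd; auto).
  rewrite (ell_M X M (comp w (tr i k))), (ell_M X M w) in Hell by auto.
  destruct (Z.eq_dec i 0) as [Hi0|Hi0].
  { subst i. exfalso. destruct X.
    3: { specialize (HtD eq_refl). rewrite ell0_tr0 in HtD by (auto; lia).
         destruct HtD as [z Hz]; lia. }
    all: destruct (cover_zero w M k Hw HwM ltac:(lia) ltac:(unfold M; lia)) as [C1 C2];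
      unfold NB in C1, C2; cbn [ellM] in Hell;
      assert (w k <> 0) by (rewrite <- W0; intros E; apply Wi in E; lia);
      assert (w k < 0 \/ 0 < w k) as [E|E] by lia; [specialize (C2 E)|specialize (C1 E)]; dlia. }
  assert (Vik : w i <> w k) by (intros E; apply Wi in E; lia).
  destruct (cover_gen w M i k Hw HwM ltac:(lia) Hik Hi0 Hmk ltac:(unfold M; lia) ltac:(unfold M; lia))
    as [CG1 CG2].
  assert (Hlt : w i < w k).
  { assert (w i < w k \/ w k < w i) as [E|E] by lia; auto. exfalso.
    destruct (CG2 E) as [C1 C2]. unfold NB, ND in C1, C2. destruct X; cbn [ellM] in Hell; dlia. }
  destruct (CG1 Hlt) as [I [I0 [IB [ID I3]]]]. clear CG1 CG2.
  assert (Ilt : I < 2) by (unfold NB, ND in IB, ID; destruct X; cbn [ellM] in Hell; dlia).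
  assert (NI : forall c, c <> i -> c <> k -> c <> -i -> c <> -k -> i < c < k -> w i < w c < w k -> False).
  { intros. assert (2 <= I) by (apply (I3 c); auto). lia. }
  clear I3.
  assert (Hib : - n - 1 <= i).
  { destruct (Z_le_gt_dec (-n-1) i) as [E|E]; auto. exfalso.
    assert (w i = i) by (apply Hwb; lia).
    assert (w (-n-1) = -n-1) by (apply Hwb; lia).
    pose proof (win_pres w _ Hw Hwb k ltac:(lia)).
    apply (NI (-n-1)); lia. }
  destruct (tr_vals i k) as [Ti [Tk [Tmi Tmk]]]; try lia.
  assert (Ha : in_W X (n+1) (comp w (tr i k))).
  { split; [split; auto|].
    - intros HX. specialize (HwD HX).
      pose proof (ell0_parity w M i k Hw HwM ltac:(lia) Hik Hi0 Hmk ltac:(unfold M; lia) ltac:(unfold M; lia)) as Hp.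
      rewrite (ell0_M M (comp w (tr i k))) by auto. rewrite (ell0_M M w) in HwD by auto.
      destruct HwD as [z1 Hz1]; destruct Hp as [z2 Hz2]. exists (z1+z2). lia.
    - intros m Hm. unfold comp. rewrite tr_fix by lia. apply Hwfix; lia. }
  split; [exact Ha|]. split; [unfold comp; rewrite Tk; auto|]. split.
  - intros m [Hm0 Hdes]. unfold comp in Hdes.
    destruct (Z.eq_dec m (k-1)) as [E|E]; [right; auto|left]. split; [lia|].
    assert (H : w (m+1) < w m \/ w m < w (m+1))
      by (assert (w (m+1) <> w m) by (intros Q; apply Wi in Q; lia); lia).
    destruct H as [H|H]; [auto|exfalso].
    pose proof (Wo m) as Wm. pose proof (Wo i) as Wmi. pose proof (Wo k) as Wmk.
    assert (N1 : ~ (m+1 <> i /\ m+1 <> k /\ m+1 <> -i /\ m+1 <> -k /\ i < m+1 < k /\ w i < w (m+1) < w k))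
      by (intros [? [? [? [? [? ?]]]]]; eapply NI; eauto).
    assert (N2 : ~ (-m <> i /\ -m <> k /\ -m <> -i /\ -m <> -k /\ i < -m < k /\ w i < w (-m) < w k))
      by (intros [? [? [? [? [? ?]]]]]; eapply NI; eauto).
    pose proof (Wo (m+1)) as Wm1.
    clear NI Ha HwD Hwfix HtD Hell I0 IB ID Ilt Ws Wf Hwb HwM HtM Hv HvM Ti Tk Tmi Tmk Vik.
    destruct (tr_cases i k m) as [[E1 T1]|[[E1 T1]|[[E1 T1]|[[E1 T1]|[E1a [E1b [E1c [E1d T1]]]]]]]];
    destruct (tr_cases i k (m+1)) as [[E2 T2]|[[E2 T2]|[[E2 T2]|[[E2 T2]|[E2a [E2b [E2c [E2d T2]]]]]]]];
    try lia;
    rewrite T1, T2 in Hdes; clear T1 T2;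
    idtac.
    all: try (rewrite E2 in *); try (rewrite E1 in *);
      first [clear N1 N2; lia | clear N2; lia | clear N1; lia].
  - intros Hnot.
    assert (Hi : i = -n-1).
    { destruct (Z.eq_dec i (-n-1)); auto. exfalso. apply Hnot. split; [apply Ha|].
      intros m Hm. unfold comp. rewrite tr_fix by lia. apply Hwfix; lia. }
    split; [auto|].
    intros j Hj Htj.
    set (v := comp w (tr i k)) in *.
    set (M' := Z.to_nat (n+1)).
    assert (HvM' : bnd M' v).
    { apply comp_bnd; [apply (bnd_mono (Z.to_nat n)); [unfold M'; lia|auto] | apply tr_bnd; unfold M'; lia]. }
    assert (Hvk : v k = -n-1) by (unfold v, comp; rewrite Tk, Hi; apply Hwb; lia).
    destruct Htj as [Htj HtjD].
    destruct (Z.eq_dec j (-k)) as [->|Hjk]. { rewrite ell_id_k by lia. lia. }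
    assert (Hv2 : is_signed_perm (comp v (tr j k))) by (apply comp_sp; auto).
    assert (Hv2M : bnd M' (comp v (tr j k))) by (apply comp_bnd; auto; apply tr_bnd; unfold M'; lia).
    rewrite (ell_M X M' (comp v (tr j k))), (ell_M X M' v) by auto.
    destruct (Z.eq_dec j 0) as [->|Hj0].
    + destruct X.
      3: { exfalso. specialize (HtjD eq_refl). rewrite ell0_tr0 in HtjD by (auto; lia).
           destruct HtjD as [z Hz]; lia. }
      all: destruct (cover_zero v M' k Hv HvM' ltac:(lia) ltac:(unfold M'; lia)) as [_ C2];
        specialize (C2 ltac:(lia)); unfold NB in C2; cbn [ellM]; dlia.
    + assert (Hvj : v j = w j) by (unfold v, comp; rewrite tr_fix; lia).
      pose proof (win_pres w _ Hw Hwb j ltac:(lia)).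
      destruct (cover_gen v M' j k Hv HvM' ltac:(lia) ltac:(lia) Hj0 Hjk ltac:(unfold M'; lia) ltac:(unfold M'; lia))
        as [_ C2].
      destruct (C2 ltac:(lia)) as [C3 C4]. unfold NB, ND in C3, C4. destruct X; cbn [ellM]; dlia.
Qed.
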